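(* Let $q=p^n$ be a prime power with $q\equiv 5\pmod 8$, let $\chi$ be a generator of the cyclic group $\widehat{\mathbb{F}_q^{\times}}$ of multiplicative characters of $\mathbb{F}_q$, and let $1\le r\le q-2$ be an integer. Let $a_1,\dots,a_{(q-1)/4}$ be the distinct elements of $D_4=\{x^4:x\in\mathbb{F}_q^{\times}\}$ (in any fixed order) and let $$B_{q,4}(\chi^r):=\left[\chi^r(a_i+a_j)+\chi^r(a_i-a_j)\right]_{1\le i,j\le (q-1)/4}.$$ Then $$\det(B_{q,4}(\chi^r))=(-1)^r\left(\frac{q}{2}\right)^{\frac{q-1}{4}}\prod_{k=0}^{(q-5)/4}\ {}_{2}F_{1}\left(\begin{array}{cc}\chi^{-r} & \chi^{4k}\\ & \chi^{4k+r}\end{array}\Bigg|\,-1\right)_q.$$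
   Context: Every multiplicative character $\psi$ of $\mathbb{F}_q$ is extended to $\mathbb{F}_q$ by $\psi(0)=0$ (including the trivial character). For characters $A,B$, the Jacobi sum is $J_q(A,B)=\sum_{x\in\mathbb{F}_q}A(x)B(1-x)$, and Greene's binomial coefficient is $\binom{A}{B}:=\frac{B(-1)}{q}J_q(A,\bar B)$, where $\bar B=B^{-1}$. For characters $A_0,A_1,B_1$ and $x\in\mathbb{F}_q$, Greene's Gaussian hypergeometric function is $${}_{2}F_{1}\left(\begin{array}{cc}A_0 & A_1\\ & B_1\end{array}\Bigg|\,x\right)_q:=\frac{q}{q-1}\sum_{\psi\in\widehat{\mathbb{F}_q^{\times}}}\binom{A_0\psi}{\psi}\binom{A_1\psi}{B_1\psi}\psi(x).$$ *)

(* Defs.v *)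
From mathcomp Require Import all_boot all_order all_algebra all_field.
Set Implicit Arguments. Unset Strict Implicit. Unset Printing Implicit Defensive.
Import Order.TTheory GRing.Theory Num.Theory.
Local Open Scope ring_scope.

(* Multiplicative characters of a finite field F, valued in algC, extended by
   psi(0) = 0 (also for the trivial character). *)
Section Chars.
Variable F : finFieldType.

Definition mult_char (psi : F -> algC) : Prop :=
  [/\ psi 0 = 0, psi 1 = 1 & forall x y, psi (x * y) = psi x * psi y].

Definition charpow (psi : F -> algC) (k : nat) : F -> algC :=
  fun x => if x == 0 then 0 else psi x ^+ k.

Definition charinv (psi : F -> algC) : F -> algC :=
  fun x => if x == 0 then 0 else (psi x)^-1.

Definition charmul (A B : F -> algC) : F -> algC := fun x => A x * B x.

Definition char_generator (chi : F -> algC) : Prop :=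
  mult_char chi /\
  forall psi, mult_char psi -> exists k : nat, forall x, psi x = charpow chi k x.

Definition jacobi (A B : F -> algC) : algC := \sum_(x : F) A x * B (1 - x).

Definition gbinom (A B : F -> algC) : algC :=
  B (-1) / (#|F|%:R) * jacobi A (charinv B).

(* Greene's 2F1; the sum over the character group is written as a sum over
   the powers chi^k, 0 <= k < q-1, of a generator chi. *)
Definition hyp2F1 (chi : F -> algC) (A0 A1 B1 : F -> algC) (x : F) : algC :=
  (#|F|%:R / (#|F|.-1)%:R) *
  \sum_(k < #|F|.-1)
     gbinom (charmul A0 (charpow chi k)) (charpow chi k) *
     gbinom (charmul A1 (charpow chi k)) (charmul B1 (charpow chi k)) *
     charpow chi k x.

Definition D4 (x : F) : Prop := exists y : F, y != 0 /\ x = y ^+ 4.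

End Chars.

(* Main.v *)
Require Import Defs.
From mathcomp Require Import all_boot all_order all_algebra all_field.
From mathcomp Require Import cyclic zify ring.
Set Implicit Arguments. Unset Strict Implicit. Unset Printing Implicit Defensive.
Import Order.TTheory GRing.Theory Num.Theory.
Local Open Scope ring_scope.

Section Basics.
Variable F : finFieldType.

Lemma card_gt1 : (1 < #|F|)%N.
Proof. exact: finNzRing_gt1. Qed.

Lemma unit_expN (x : F) : x != 0 -> x ^+ #|F|.-1 = 1.
Proof.
move=> x0; have := expf_card x.
have q0 : (0 < #|F|)%N by have := card_gt1; lia.
rewrite -(prednK q0) exprS => H.
apply: (mulfI x0); by rewrite H mulr1.
Qed.

Lemma exists_gen : exists g : F, #|F|.-1.-primitive_root g.
Proof.
pose rs := enum [pred x : F | x != 0].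
have N0 : (0 < #|F|.-1)%N by have := card_gt1; lia.
have : has #|F|.-1.-primitive_root rs.
  apply: has_prim_root => //.
  - by apply/allP => x; rewrite mem_enum inE => x0; rewrite unity_rootE unit_expN.
  - exact: enum_uniq.
  - by rewrite /rs -cardE cardC1.
by case/hasP => g _ Hg; exists g.
Qed.

End Basics.

Section Chi.
Variable F : finFieldType.
Variable chi : F -> algC.
Hypothesis Hchi : char_generator chi.
Variable g : F.
Hypothesis Hg : #|F|.-1.-primitive_root g.
Local Notation N := #|F|.-1.

Lemma chi0 : chi 0 = 0. Proof. by case: Hchi => -[]. Qed.
Lemma chi1 : chi 1 = 1. Proof. by case: Hchi => -[]. Qed.
Lemma chiM x y : chi (x * y) = chi x * chi y. Proof. by case: Hchi => -[]. Qed.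
Lemma chiX x n : chi (x ^+ n) = chi x ^+ n.
Proof. by elim: n => [|n IH]; rewrite ?expr0 ?chi1 // !exprS chiM IH. Qed.
Lemma chi_neq0 x : x != 0 -> chi x != 0.
Proof.
move=> x0; apply/eqP => H; have := chiM x x^-1.
by rewrite mulfV // chi1 H mul0r; apply/eqP; rewrite oner_eq0.
Qed.
Lemma chiV x : chi x^-1 = (chi x)^-1.
Proof.
have [->|x0] := eqVneq x 0; first by rewrite invr0 chi0 invr0.
apply: (mulfI (chi_neq0 x0)); by rewrite -chiM mulfV // mulfV ?chi1 // chi_neq0.
Qed.

Lemma N_gt0 : (0 < N)%N. Proof. by have := card_gt1 F; lia. Qed.

Lemma gen_all x : x != 0 -> exists i : 'I_N, x = g ^+ i.
Proof. by move=> x0; have [i ->] := prim_rootP Hg (unit_expN x0); exists i. Qed.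

Definition dlog (x : F) : nat := oapp (@nat_of_ord _) 0%N [pick i : 'I_N | g ^+ i == x].

Lemma dlogK x : x != 0 -> g ^+ dlog x = x.
Proof.
move=> x0; rewrite /dlog; case: pickP => [i /eqP //|].
by have [i ->] := gen_all x0 => /(_ i); rewrite eqxx.
Qed.

Lemma chi_eq1 x : x != 0 -> chi x = 1 -> x = 1.
Proof.
move=> x0 cx1.
have [z Hz] := C_prim_root_exists N_gt0.
pose psi (y : F) : algC := if y == 0 then 0 else z ^+ dlog y.
have eqd y y' : y != 0 -> y' != 0 -> (y == y') = (dlog y == dlog y' %[mod N]).
  by move=> y0 y'0; rewrite -(eq_prim_root_expr Hg) !dlogK.
have mpsi : mult_char psi.
  split; first by rewrite /psi eqxx.
    rewrite /psi oner_eq0; apply/eqP; rewrite -(expr0 z) (eq_prim_root_expr Hz).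
    by rewrite -(eq_prim_root_expr Hg) dlogK ?oner_eq0 ?expr0.
  move=> y y'; rewrite /psi.
  have [->|y0] := eqVneq y 0; first by rewrite mul0r eqxx mul0r.
  have [->|y'0] := eqVneq y' 0; first by rewrite mulr0 eqxx mulr0.
  rewrite mulf_eq0 (negbTE y0) (negbTE y'0) /= -exprD; apply/eqP.
  rewrite (eq_prim_root_expr Hz) -(eq_prim_root_expr Hg) exprD !dlogK //.
  by rewrite mulf_neq0.
have [k Hk] := Hchi.2 psi mpsi.
have := Hk x; rewrite /psi /charpow (negbTE x0) cx1 expr1n => /eqP.
rewrite -(expr0 z) (eq_prim_root_expr Hz) -(eq_prim_root_expr Hg) dlogK // expr0.
by move/eqP.
Qed.

Lemma chi_unitN x : x != 0 -> chi x ^+ N = 1.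
Proof. by move=> x0; rewrite -chiX unit_expN // chi1. Qed.

Lemma orth u : u != 0 -> \sum_(k < N) chi u ^+ k = (u == 1)%:R * N%:R.
Proof.
move=> u0; have [->|u1] := eqVneq u 1.
  by rewrite chi1 mul1r; under eq_bigr do rewrite expr1n; rewrite sumr_const card_ord.
rewrite mul0r; apply/eqP; have : chi u - 1 != 0.
  by rewrite subr_eq0; apply/eqP => /(chi_eq1 u0); apply/eqP.
move=> c1; rewrite -(mulrI_eq0 _ (mulfI c1)) -subrX1 chi_unitN // subrr //.
Qed.

End Chi.

Lemma orthF (F : finFieldType) (chi : F -> algC) (Hchi : char_generator chi) (u : F) :
  u != 0 -> \sum_(k < #|F|.-1) chi u ^+ k = (u == 1)%:R * (#|F|.-1)%:R.
Proof. have [g Hg] := @exists_gen F; move=> u0; have := orth Hchi Hg u0; exact. Qed.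

Lemma chi_eq1F (F : finFieldType) (chi : F -> algC) (Hchi : char_generator chi) (x : F) :
  x != 0 -> chi x = 1 -> x = 1.
Proof. have [g Hg] := @exists_gen F; move=> x0 cx; exact: (chi_eq1 Hchi Hg x0 cx). Qed.

Section Hyp.
Variable F : finFieldType.
Variable chi : F -> algC.
Hypothesis Hchi : char_generator chi.
Hypothesis Hm1 : chi (-1) = -1.
Variables r j : nat.
Hypothesis jeven : ~~ odd j.
Local Notation N := #|F|.-1.
Local Notation q := #|F|.

Let A0 := charinv (charpow chi r).
Let A1 := charpow chi j.
Let B1 := charpow chi (j + r).
Definition Kf (y z : F) : algC :=
  A0 y * charpow chi 0 (1 - y) * B1 (-1) * A1 z * charinv B1 (1 - z).
Definition uf (y z : F) : F := - (y * z) / ((1 - y) * (1 - z)).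

Lemma cpow_nz k x : x != 0 -> charpow chi k x = chi x ^+ k.
Proof. by rewrite /charpow => /negbTE ->. Qed.
Lemma cinv_nz (B : F -> algC) x : x != 0 -> charinv B x = (B x)^-1.
Proof. by rewrite /charinv => /negbTE ->. Qed.
Lemma cpow0 k : charpow chi k 0 = 0. Proof. by rewrite /charpow eqxx. Qed.
Lemma cinv0 (B : F -> algC) : charinv B 0 = 0. Proof. by rewrite /charinv eqxx. Qed.

Lemma cm1_sq : chi (-1) ^+ 2 = 1. Proof. by rewrite Hm1 sqrrN expr1n. Qed.
Lemma cm1_even k : ~~ odd k -> chi (-1) ^+ k = 1.
Proof.
by move=> ke; rewrite -(odd_double_half k) (negbTE ke) add0n -mul2n exprM cm1_sq expr1n.
Qed.

Lemma Kf_good y z : Kf y z != 0 -> [/\ y != 0, y != 1, z != 0 & z != 1].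
Proof.
rewrite /Kf /A0 /A1 /B1.
have [->|y0] := eqVneq y 0; first by rewrite cinv0 !mul0r eqxx.
have [->|y1] := eqVneq y 1; first by rewrite subrr cpow0 mulr0 !mul0r eqxx.
have [->|z0] := eqVneq z 0; first by rewrite cpow0 mulr0 mul0r eqxx.
have [->|z1] := eqVneq z 1; first by rewrite subrr cinv0 mulr0 eqxx.
by [].
Qed.

Lemma term_eq k y z :
  charpow chi k (-1) *
    (charmul A0 (charpow chi k) y * charinv (charpow chi k) (1 - y)) *
  (charmul B1 (charpow chi k) (-1) *
    (charmul A1 (charpow chi k) z * charinv (charmul B1 (charpow chi k)) (1 - z))) *
  charpow chi k (-1)
  = Kf y z * chi (uf y z) ^+ k.
Proof.
rewrite /Kf /charmul /A0 /A1 /B1.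
have [->|y0] := eqVneq y 0; first by rewrite ?(cinv0, cpow0, subrr, mul0r, mulr0).
have [->|y1] := eqVneq y 1; first by rewrite ?(cinv0, cpow0, subrr, mul0r, mulr0).
have [->|z0] := eqVneq z 0; first by rewrite ?(cinv0, cpow0, subrr, mul0r, mulr0).
have [->|z1] := eqVneq z 1; first by rewrite ?(cinv0, cpow0, subrr, mul0r, mulr0).
have m10 : (-1 : F) != 0 by rewrite oppr_eq0 oner_eq0.
have y10 : 1 - y != 0 by rewrite subr_eq0 eq_sym.
have z10 : 1 - z != 0 by rewrite subr_eq0 eq_sym.
rewrite /uf.
rewrite !cinv_nz // !cpow_nz // expr0 mulr1.
rewrite -[-(y * z)]mulN1r !(chiM Hchi) (chiV Hchi) (chiM Hchi) !exprMn !exprVn.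
have e : chi (-1) ^+ k * chi (-1) ^+ k = 1.
  by rewrite -exprD addnn cm1_even ?odd_double.
have e' X : X = X * (chi (-1) ^+ k * chi (-1) ^+ k) by rewrite e mulr1.
rewrite [RHS]e' exprMn.
have cy := chi_neq0 Hchi y0; have cz := chi_neq0 Hchi z0.
have cy1 := chi_neq0 Hchi y10; have cz1 := chi_neq0 Hchi z10.
field.
by rewrite !expf_neq0.
Qed.

Lemma sumk_eq y z :
  \sum_(k < N) Kf y z * chi (uf y z) ^+ k = Kf y z * (uf y z == 1)%:R * N%:R.
Proof.
have [->|/Kf_good [y0 y1 z0 z1]] := eqVneq (Kf y z) 0.
  by rewrite big1 ?mul0r // => k _; rewrite mul0r.
have y10 : 1 - y != 0 by rewrite subr_eq0 eq_sym.
have z10 : 1 - z != 0 by rewrite subr_eq0 eq_sym.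
have u0 : uf y z != 0.
  by rewrite /uf !mulf_eq0 oppr_eq0 invr_eq0 !mulf_eq0 (negbTE y0) (negbTE z0) (negbTE y10) (negbTE z10).
by rewrite -mulr_sumr (orthF Hchi) // mulrA.
Qed.

Definition y0f (z : F) : F := (z - 1) / (z + z - 1).

Lemma select_eq y z : Kf y z * (uf y z == 1)%:R = Kf y z * (y == y0f z)%:R.
Proof.
have [->|/Kf_good [y0 y1 z0 z1]] := eqVneq (Kf y z) 0; first by rewrite !mul0r.
have y10 : 1 - y != 0 by rewrite subr_eq0 eq_sym.
have z10 : 1 - z != 0 by rewrite subr_eq0 eq_sym.
have Dnz : (1 - y) * (1 - z) != 0 by rewrite mulf_neq0.
congr (_ * _%:R); congr (nat_of_bool _).
have -> : (uf y z == 1) = (- (y * z) == (1 - y) * (1 - z)).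
  rewrite /uf; apply/eqP/eqP => H.
    by rewrite -(divfK Dnz (- (y * z))) H mul1r.
  by rewrite H divff.
have -> : (- (y * z) == (1 - y) * (1 - z)) = (y * (z + z - 1) == z - 1).
  rewrite -subr_eq0 -[RHS]subr_eq0.
  have -> : - (y * z) - (1 - y) * (1 - z) = - (y * (z + z - 1) - (z - 1)) by ring.
  by rewrite oppr_eq0.
rewrite /y0f; have [->|dnz] := eqVneq (z + z - 1) 0.
  rewrite mulr0 invr0 mulr0 (negbTE y0) eq_sym.
  by rewrite subr_eq0 (negbTE z1).
apply/idP/idP => /eqP H; apply/eqP; first by rewrite -H mulfK.
by rewrite H divfK.
Qed.

Lemma sumy_eq z : \sum_(y : F) Kf y z * (y == y0f z)%:R = Kf (y0f z) z.
Proof.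
rewrite (bigD1 (y0f z)) //= eqxx mulr1 big1 ?addr0 // => y /negbTE ->.
by rewrite mulr0.
Qed.

Definition sigf (y : F) : F := if y == -1 then 1 else y / (1 + y).

Lemma sigf_inj : injective sigf.
Proof.
have key (y : F) : y != -1 -> 1 + y != 0.
  by move=> ym1; rewrite addrC addr_eq0.
have ne1 (y : F) : y != -1 -> y / (1 + y) != 1.
  move=> ym1; apply/eqP => H; have := divfK (key y ym1) y.
  by rewrite H mul1r => /eqP; rewrite -subr_eq0 addrK oner_eq0.
move=> y y'; rewrite /sigf.
have [->|ym1] := eqVneq y (-1); have [->|y'm1] := eqVneq y' (-1) => //.
- by move/esym/eqP; rewrite (negbTE (ne1 _ y'm1)).
- by move/eqP; rewrite (negbTE (ne1 _ ym1)).
move=> H; have k1 := key y ym1; have k2 := key y' y'm1.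
have : y * (1 + y') == y' * (1 + y) by rewrite -eqr_div // H.
move/eqP => E; apply/eqP; rewrite -subr_eq0; apply/eqP.
have -> : y - y' = y * (1 + y') - y' * (1 + y) by ring.
by rewrite E subrr.
Qed.

Lemma m1_neq1 : (-1 : F) != 1.
Proof.
apply/eqP => H; have := Hm1; rewrite H (chi1 Hchi) => /eqP.
by rewrite -subr_eq0 opprK -mulr2n pnatr_eq0.
Qed.

Lemma two_neq0 : (1 + 1 : F) != 0.
Proof. by rewrite addr_eq0 eq_sym m1_neq1. Qed.

Lemma sig_eval y : Kf (y0f (sigf y)) (sigf y) =
  (-1) ^+ r * (charpow chi j y * charpow chi r (1 - y) * charpow chi r (1 + y)).
Proof.
rewrite /sigf /Kf /A0 /A1 /B1.
have [->|ym1] := eqVneq y (-1).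
  by rewrite ?(subrr, addrN, cinv0, cpow0, mulr0, mul0r).
have [->|y0] := eqVneq y 0.
  by rewrite ?(cinv0, cpow0, mulr0, mul0r).
have [->|y1] := eqVneq y 1.
  have -> : y0f (1 / (1 + 1)) = 0.
    by rewrite /y0f (_ : 1 / (1 + 1) + 1 / (1 + 1) - 1 = 0) ?invr0 ?mulr0 //; field; exact: two_neq0.
  by rewrite ?(subrr, cinv0, cpow0, mulr0, mul0r).
have y10 : 1 - y != 0 by rewrite subr_eq0 eq_sym.
have yp10 : 1 + y != 0 by rewrite addrC addr_eq0.
have ym10 : y - 1 != 0 by rewrite subr_eq0.
have E1 : 1 - y / (1 + y) = (1 + y)^-1 by field.
have E2 : y0f (y / (1 + y)) = (1 - y)^-1.
  rewrite /y0f; field; rewrite yp10 y10 /=.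
  by rewrite (_ : y + y + -1 * (1 + y) = y - 1) //; ring.
have E3 : 1 - (1 - y)^-1 = - y / (1 - y) by field.
rewrite E1 E2 E3.
have nz1 : (1 + y)^-1 != 0 by rewrite invr_eq0.
have nz2 : (1 - y)^-1 != 0 by rewrite invr_eq0.
have nz3 : - y / (1 - y) != 0 by rewrite mulf_neq0 ?oppr_eq0 ?invr_eq0.
have nz4 : y / (1 + y) != 0 by rewrite mulf_neq0 ?invr_eq0.
have m10 : (-1 : F) != 0 by rewrite oppr_eq0 oner_eq0.
rewrite !cinv_nz // !cpow_nz // expr0 mulr1.
rewrite !(chiM Hchi) !(chiV Hchi) !exprMn !exprVn !exprD (cm1_even jeven) mul1r Hm1.
have cy := chi_neq0 Hchi y0; have cy1 := chi_neq0 Hchi y10.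
have cyp1 := chi_neq0 Hchi yp10.
field.
by rewrite !expf_neq0.
Qed.

Lemma sum2_helper (a b c d : algC) (X Z : F -> algC) :
  (a * d * \sum_y X y) * (b * d * \sum_z Z z) * c =
  d * d * \sum_y \sum_z (a * X y * (b * Z z) * c).
Proof.
have E : \sum_y \sum_z (a * X y * (b * Z z) * c) =
         \sum_y \sum_z ((a * c * X y) * (b * Z z)).
  by apply: eq_bigr => y _; apply: eq_bigr => z _; ring.
rewrite E -big_distrlr /= -!mulr_sumr; ring.
Qed.

Lemma hyp_eval :
  hyp2F1 chi (charinv (charpow chi r)) (charpow chi j) (charpow chi (j + r)) (-1)
  = (-1) ^+ r / q%:R *
    \sum_(y : F) charpow chi j y * charpow chi r (1 - y) * charpow chi r (1 + y).
Proof.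
rewrite /hyp2F1 /gbinom /jacobi.
have S1 : forall k : 'I_N,
  charpow chi k (-1) / q%:R *
    (\sum_x charmul A0 (charpow chi k) x * charinv (charpow chi k) (1 - x)) *
  (charmul B1 (charpow chi k) (-1) / q%:R *
    (\sum_x charmul A1 (charpow chi k) x * charinv (charmul B1 (charpow chi k)) (1 - x))) *
  charpow chi k (-1)
  = q%:R^-1 * q%:R^-1 * \sum_y \sum_z Kf y z * chi (uf y z) ^+ k.
  move=> k; rewrite sum2_helper; congr (_ * _).
  by apply: eq_bigr => y _; apply: eq_bigr => z _; rewrite term_eq.
rewrite (eq_bigr _ (fun k _ => S1 k)) -mulr_sumr.
rewrite exchange_big /=.
under eq_bigr => y _ do rewrite exchange_big /=.
under eq_bigr => y _ do under eq_bigr => z _ do rewrite sumk_eq select_eq.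
under eq_bigr => y _ do rewrite -mulr_suml.
rewrite -mulr_suml exchange_big /=.
under eq_bigr => z _ do rewrite sumy_eq.
rewrite (reindex_inj sigf_inj) /=.
under eq_bigr => y _ do rewrite sig_eval.
rewrite -mulr_sumr.
have q0 : q%:R != 0 :> algC by rewrite pnatr_eq0 -lt0n; have := card_gt1 F; lia.
have N0 : N%:R != 0 :> algC by rewrite pnatr_eq0 -lt0n; have := card_gt1 F; lia.
move: q0 N0; set S := \sum_(y : F) _.
move: (q%:R : algC) (N%:R : algC) => a b a0 b0; move: ((-1) ^+ r : algC) => s; field; by rewrite a0 b0.
Qed.

End Hyp.

Section Generic.

Lemma big_reindex_set (R : Type) (idx : R) (op : Monoid.com_law idx) (T : finType) n
    (f : 'I_n -> T) (A : {set T}) (G : T -> R) :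
  injective f -> (forall i, f i \in A) -> #|A| = n ->
  \big[op/idx]_(x in A) G x = \big[op/idx]_(i < n) G (f i).
Proof.
move=> finj fA cA.
have E : A = [set f i | i in [set: 'I_n]].
  apply/eqP; rewrite eq_sym eqEcard; apply/andP; split.
    by apply/subsetP => x /imsetP [i _ ->].
  by rewrite card_imset // cardsT card_ord cA.
rewrite E big_imset /=; last by move=> i j _ _; apply: finj.
by apply: eq_bigl => i; rewrite inE.
Qed.

Lemma sum_double (H : nat -> algC) n : (forall e, H (e + n)%N = H e) ->
  \sum_(0 <= e < (n + n)%N) H e = 2%:R * \sum_(0 <= e < n) H e.
Proof.
move=> Hp; rewrite (@big_cat_nat _ _ _ n) ?leq_addr //=.
rewrite -{2}[n]add0n big_addn addnK.
under [X in _ + X = _]eq_bigr => e _ do rewrite Hp.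
by rewrite mulr_natl mulr2n.
Qed.

Lemma sum_evenodd (H : nat -> algC) n :
  \sum_(0 <= e < (2 * n)%N) H e =
  \sum_(0 <= t < n) H (2 * t)%N + \sum_(0 <= t < n) H (2 * t)%N.+1.
Proof.
elim: n => [|n IH]; first by rewrite muln0 !big_mkord !big_ord0 addr0.
rewrite (_ : (2 * n.+1 = (2 * n).+2)%N); last by lia.
rewrite !big_nat_recr //= IH.
by rewrite -!addrA; congr (_ + _); rewrite addrCA.
Qed.

Lemma sum_shift1 (G : nat -> algC) n : G n = G 0%N ->
  \sum_(0 <= t < n) G t.+1 = \sum_(0 <= t < n) G t.
Proof.
move=> Gn.
have E1 := @big_nat_recl algC 0 +%R n 0 G (leq0n n).
have E2 := @big_nat_recr algC 0 +%R n 0 G (leq0n n).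
rewrite E1 Gn addrC in E2.
exact: (addIr _ E2).
Qed.

Lemma sum_shift (G : nat -> algC) n s : (forall t, G (t + n)%N = G t) ->
  \sum_(0 <= t < n) G (t + s)%N = \sum_(0 <= t < n) G t.
Proof.
move=> Gp; elim: s => [|s IH]; first by under eq_bigr do rewrite addn0.
have E := @sum_shift1 (fun t => G (t + s)%N) n.
have Gns : G (n + s)%N = G (0 + s)%N by rewrite addnC Gp.
rewrite -IH -(E Gns).
by apply: eq_bigr => t _; rewrite addnS addSn.
Qed.

Lemma sum_reindex_set (T : finType) n (f : 'I_n -> T) (A : {set T}) (G : T -> algC) :
  injective f -> (forall i, f i \in A) -> #|A| = n ->
  \sum_(x in A) G x = \sum_(i < n) G (f i).
Proof. exact: big_reindex_set. Qed.

Lemma prod_reindex_set (T : finType) n (f : 'I_n -> T) (A : {set T}) (G : T -> algC) :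
  injective f -> (forall i, f i \in A) -> #|A| = n ->
  \prod_(x in A) G x = \prod_(i < n) G (f i).
Proof. exact: big_reindex_set. Qed.

End Generic.

Section Det.
Variable F : finFieldType.
Variable chi : F -> algC.
Hypothesis Hchi : char_generator chi.
Variable g : F.
Hypothesis Hg : #|F|.-1.-primitive_root g.
Variable m : nat.
Hypothesis HN : #|F|.-1 = (4 * m)%N.
Hypothesis modd : odd m.
Local Notation N := #|F|.-1.

Definition S4 : {set F} := [set x : F | [exists y : F, (y != 0) && (x == y ^+ 4)]].

Lemma m_gt0 : (0 < m)%N. Proof. by case: m modd. Qed.

Lemma gN : g ^+ (4 * m) = 1. Proof. by rewrite -HN prim_expr_order. Qed.

Lemma g_neq0 : g != 0.
Proof.
apply/eqP => g0; have := gN; rewrite g0 expr0n.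
have mp := m_gt0; rewrite (_ : (4 * m == 0)%N = false); last by lia.
by move/eqP; rewrite eq_sym oner_eq0.
Qed.

Lemma g2m : g ^+ (2 * m) = -1.
Proof.
have mp := m_gt0.
have ne : g ^+ (2 * m) != 1.
  rewrite -(expr0 g) (eq_prim_root_expr Hg) HN mod0n modn_small; last by lia.
  by apply/eqP; lia.
have sq : (g ^+ (2 * m)) ^+ 2 = 1.
  by rewrite -exprM (_ : (2 * m * 2 = 4 * m)%N) ?gN //; lia.
have : (g ^+ (2 * m) - 1) * (g ^+ (2 * m) + 1) = 0.
  by rewrite -subr_sqr sq expr1n subrr.
move/eqP; rewrite mulf_eq0 subr_eq0 (negbTE ne) /= addr_eq0.
by move/eqP.
Qed.

Lemma m1_neq1F : (-1 : F) != 1.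
Proof.
rewrite -g2m -(expr0 g) (eq_prim_root_expr Hg) HN mod0n modn_small; last by have := m_gt0; lia.
by have := m_gt0 => ?; apply/eqP; lia.
Qed.

Lemma chim1 : chi (-1) = -1.
Proof.
have sq : chi (-1) ^+ 2 = 1 by rewrite -(chiX Hchi) sqrrN expr1n (chi1 Hchi).
have ne : chi (-1) != 1.
  have m10 : (-1 : F) != 0 by rewrite oppr_eq0 oner_eq0.
  apply/eqP => H; have := m1_neq1F; by rewrite (chi_eq1F Hchi m10 H) eqxx.
have : (chi (-1) - 1) * (chi (-1) + 1) = 0.
  by rewrite -subr_sqr sq expr1n subrr.
move/eqP; rewrite mulf_eq0 subr_eq0 (negbTE ne) /= addr_eq0.
by move/eqP.
Qed.

Lemma D4_S4 x : D4 x <-> x \in S4.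
Proof.
rewrite inE; split.
  by case=> y [y0 ->]; apply/existsP; exists y; rewrite y0 eqxx.
by case/existsP => y /andP [y0 /eqP ->]; exists y.
Qed.

Lemma S4_neq0 x : x \in S4 -> x != 0.
Proof. by rewrite inE => /existsP [y /andP [y0 /eqP ->]]; rewrite expf_neq0. Qed.

Lemma S4_div x y : x \in S4 -> y \in S4 -> x / y \in S4.
Proof.
rewrite !inE => /existsP [u /andP [u0 /eqP ->]] /existsP [v /andP [v0 /eqP ->]].
apply/existsP; exists (u / v); rewrite mulf_neq0 ?invr_eq0 //=.
by rewrite exprMn exprVn.
Qed.

Lemma S4_gp (t : nat) : g ^+ (4 * t) \in S4.
Proof.
rewrite inE; apply/existsP; exists (g ^+ t); rewrite expf_neq0 ?g_neq0 //=.
by rewrite -exprM mulnC.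
Qed.

Lemma gp_inj : injective (fun t : 'I_m => g ^+ (4 * t)).
Proof.
move=> s t /eqP; rewrite (eq_prim_root_expr Hg) HN -!muln_modr eqn_pmul2l //.
by rewrite !modn_small // => /eqP H; apply: val_inj.
Qed.

Lemma S4_card : #|S4| = m.
Proof.
have -> : S4 = (fun t : 'I_m => g ^+ (4 * t)) @: [set: 'I_m].
  apply/eqP; rewrite eqEsubset; apply/andP; split; last first.
    by apply/subsetP => x /imsetP [t _ ->]; apply: S4_gp.
  apply/subsetP => x; rewrite inE => /existsP [y /andP [y0 /eqP ->]].
  have [i ->] := gen_all Hg y0; move: (nat_of_ord i) => {}i.
  apply/imsetP; exists (Ordinal (ltn_pmod i m_gt0)); rewrite ?inE //=.
  by apply/eqP; rewrite -exprM (eq_prim_root_expr Hg) HN (mulnC i 4) -!muln_modr modn_mod.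
by rewrite (card_imset _ gp_inj) cardsT card_ord.
Qed.

Lemma bigS4 (R : Type) (idx : R) (op : Monoid.com_law idx) (f : 'I_m -> F) (G : F -> R) :
  injective f -> (forall i, f i \in S4) ->
  \big[op/idx]_(x in S4) G x = \big[op/idx]_(i < m) G (f i).
Proof. by move=> fi fS; apply: big_reindex_set => //; apply: S4_card. Qed.

Lemma sumS4 (f : 'I_m -> F) (G : F -> algC) :
  injective f -> (forall i, f i \in S4) ->
  \sum_(x in S4) G x = \sum_(i < m) G (f i).
Proof. exact: bigS4. Qed.

Lemma prodS4 (f : 'I_m -> F) (G : F -> algC) :
  injective f -> (forall i, f i \in S4) ->
  \prod_(x in S4) G x = \prod_(i < m) G (f i).
Proof. exact: bigS4. Qed.

Lemma m1_notS4 : (-1 : F) \notin S4.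
Proof.
apply/negP; rewrite inE => /existsP [y /andP [y0 /eqP]].
have [i ->] := gen_all Hg y0; move: (nat_of_ord i) => {}i; rewrite -g2m -exprM => /eqP.
rewrite (eq_prim_root_expr Hg) HN => /eqP /(congr1 (modn^~ 4%N)).
rewrite !modn_dvdm ?dvdn_mulr //.
have := odd_double_half m; rewrite modd.
lia.
Qed.


Lemma cpowM k x y : charpow chi k (x * y) = charpow chi k x * charpow chi k y.
Proof.
rewrite /charpow mulf_eq0.
have [->|x0] := eqVneq x 0; first by rewrite /= mul0r.
have [->|y0] := eqVneq y 0; first by rewrite /= ?orbT ?orbF ?mulr0.
by rewrite /= (chiM Hchi) exprMn.
Qed.

Variable r : nat.
Variable a : 'I_m -> F.
Hypothesis ainj : injective a.
Hypothesis aS4 : forall i, a i \in S4.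

Local Notation R := (charpow chi r).

Definition mu (k : nat) : algC :=
  \sum_(x in S4) (R (1 + x) + R (1 - x)) * chi x ^+ (2 * k).

Lemma a_neq0 i : a i != 0. Proof. exact: S4_neq0. Qed.

Lemma Psi_det : \det (\matrix_(j < m, k < m) chi (a j) ^+ (2 * k)) != 0.
Proof.
have -> : \matrix_(j < m, k < m) chi (a j) ^+ (2 * k) =
          (Vandermonde m (\row_j chi (a j) ^+ 2))^T.
  by apply/matrixP => j k; rewrite !mxE exprM.
rewrite det_tr det_Vandermonde.
apply/prodf_neq0 => i _; apply/prodf_neq0 => j ij; rewrite !mxE subr_eq0.
apply/eqP => E.
have nzi := a_neq0 i; have nzj := a_neq0 j.
have h1 : a j ^+ 2 / a i ^+ 2 = 1.
  apply: (chi_eq1F Hchi); first by rewrite mulf_neq0 ?invr_eq0 ?expf_neq0.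
  by rewrite (chiM Hchi) (chiV Hchi) !(chiX Hchi) E divff // expf_neq0 // chi_neq0.
have h2 : (a j - a i) * (a j + a i) = 0.
  rewrite -subr_sqr; apply/eqP; rewrite subr_eq0; apply/eqP.
  by rewrite -[a i ^+ 2]mul1r -h1 divfK // expf_neq0.
move/eqP: h2; rewrite mulf_eq0 => /orP [].
  rewrite subr_eq0 => /eqP /ainj ji; move: ij; by rewrite ji ltnn.
rewrite addr_eq0 => /eqP aji.
have := S4_div (aS4 j) (aS4 i); rewrite aji mulNr divff //.
by rewrite (negbTE m1_notS4).
Qed.

Lemma det_main :
  \det (\matrix_(i, j) (R (a i + a j) + R (a i - a j)))
  = \prod_i R (a i) * \prod_(k < m) mu k.
Proof.
pose H := \matrix_(i < m, j < m) (R (1 + a j / a i) + R (1 - a j / a i)).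
pose Psi := \matrix_(j < m, k < m) chi (a j) ^+ (2 * k).
have EM : \matrix_(i, j) (R (a i + a j) + R (a i - a j)) =
          diag_mx (\row_i R (a i)) *m H.
  rewrite mul_diag_mx; apply/matrixP => i j; rewrite !mxE mulrDr -!cpowM.
  have nz := a_neq0 i.
  by congr (R _ + R _); field.
have EH : H *m Psi = Psi *m diag_mx (\row_k mu k).
  rewrite mul_mx_diag; apply/matrixP => i k; rewrite !mxE.
  under eq_bigr => j _ do rewrite !mxE.
  have nz := a_neq0 i; have cnz := chi_neq0 Hchi nz.
  transitivity (chi (a i) ^+ (2 * k) *
     \sum_j (R (1 + a j / a i) + R (1 - a j / a i)) * chi (a j / a i) ^+ (2 * k)).
    rewrite mulr_sumr; apply: eq_bigr => j _.
    rewrite (chiM Hchi) (chiV Hchi) exprMn exprVn.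
    by field; rewrite expf_neq0.
  congr (_ * _).
  rewrite /mu (@sumS4 (fun j => a j / a i)) //.
    move=> j j' /= E; apply: ainj.
    by rewrite -(divfK nz (a j)) E divfK.
  by move=> j; apply: S4_div.
have dH : \det H = \prod_(k < m) mu k.
  have := congr1 determinant EH; rewrite !det_mulmx det_diag [RHS]mulrC.
  move/(mulIf Psi_det) ->; by apply: eq_bigr => k _; rewrite mxE.
rewrite EM det_mulmx det_diag dH; congr (_ * _).
by apply: eq_bigr => i _; rewrite mxE.
Qed.

Lemma chig_4m : chi g ^+ (4 * m) = 1.
Proof. by rewrite -(chiX Hchi) gN (chi1 Hchi). Qed.

Lemma prodR : \prod_i R (a i) = 1.
Proof.
rewrite (eq_bigr (fun i => chi (a i) ^+ r)); last first.
  by move=> i _; rewrite /charpow (negbTE (a_neq0 i)).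
rewrite prodrXl -(prodS4 (fun x => chi x) ainj aS4).
rewrite (prodS4 (fun x => chi x) gp_inj (fun t => S4_gp t)).
under eq_bigr do rewrite (chiX Hchi).
rewrite prodrXr.
rewrite (eq_bigr (fun t : 'I_m => 4 * t)%N) //.
rewrite -(big_mkord xpredT (fun t => 4 * t)%N) -big_distrr /= bin2_sum bin2.
have [u Hu] : exists u, m = u.*2.+1.
  by exists m./2; have := odd_double_half m; rewrite modd; lia.
have -> : (m * m.-1)./2 = (m * u)%N.
  by rewrite {2}Hu /= -muln2 mulnA muln2 doubleK.
by rewrite mulnA exprM chig_4m expr1n expr1n.
Qed.

Definition Hf (k e : nat) : algC := chi g ^+ (4 * k * e) * R (1 - g ^+ (2 * e)).

Lemma Hf_per k e : Hf k (e + 2 * m)%N = Hf k e.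
Proof.
rewrite /Hf (_ : (4 * k * (e + 2 * m) = 4 * k * e + (4 * m) * (2 * k))%N); last by nia.
rewrite exprD (exprM _ (4 * m)) chig_4m expr1n mulr1.
rewrite (_ : (2 * (e + 2 * m) = 2 * e + 4 * m)%N); last by lia.
by rewrite exprD gN mulr1.
Qed.

Lemma sumF_gen k :
  \sum_(y : F) charpow chi (4 * k) y * R (1 - y) * R (1 + y) =
  \sum_(0 <= e < 4 * m) Hf k e.
Proof.
rewrite (bigD1 0) //= cpow0 !mul0r add0r.
rewrite (eq_bigl (fun y => y \in [set~ 0])); last by move=> y; rewrite !inE.
rewrite (sum_reindex_set _ (f := fun e : 'I_N => g ^+ e)); first last.
- by rewrite cardsC1.
- by move=> e; rewrite !inE expf_neq0 // g_neq0.
- move=> e e' /eqP; rewrite (eq_prim_root_expr Hg) !modn_small //.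
  by move/eqP/val_inj.
rewrite (eq_bigr (fun e : 'I_N => Hf k e)); last first.
  move=> e _; rewrite -mulrA -cpowM (cpow_nz _ _ (expf_neq0 _ g_neq0)).
  rewrite -(chiX Hchi) -exprM /Hf (mulnC e).
  congr (_ * R _); first by rewrite (chiX Hchi).
  by rewrite mulnC exprM; ring.
by rewrite -HN big_mkord.
Qed.

Lemma mu_eq k : mu k = 2%:R^-1 *
  \sum_(y : F) charpow chi (4 * k) y * R (1 - y) * R (1 + y).
Proof.
rewrite sumF_gen (_ : (4 * m = 2 * m + 2 * m)%N); last by lia.
rewrite sum_double; last by move=> e; apply: Hf_per.
rewrite mulrA mulVf ?mul1r; last by rewrite pnatr_eq0.
rewrite sum_evenodd.
have -> : \sum_(0 <= t < m) Hf k (2 * t)%N.+1 = \sum_(0 <= t < m) Hf k (2 * t + m)%N.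
  rewrite -(@sum_shift (fun t => Hf k (2 * t)%N.+1) m m./2); last first.
    move=> t; rewrite (_ : ((2 * (t + m)).+1 = (2 * t).+1 + 2 * m)%N) ?Hf_per //; lia.
  apply: eq_bigr => t _; congr (Hf k _).
  by have := odd_double_half m; rewrite modd; lia.
rewrite -big_split /= /mu.
rewrite (sumS4 _ gp_inj (fun t => S4_gp t)) /=.
rewrite big_mkord; apply: eq_bigr => t _.
rewrite /Hf -(chiX Hchi) -exprM.
rewrite (_ : (2 * (2 * t) = 4 * t)%N); last by lia.
rewrite (_ : (2 * (2 * t + m) = 4 * t + 2 * m)%N); last by lia.
rewrite exprD g2m mulrN1 opprK.
rewrite (_ : (4 * k * (2 * t + m) = 4 * t * (2 * k) + (4 * m) * k)%N); last by nia.
rewrite (_ : (4 * k * (2 * t) = 4 * t * (2 * k))%N); last by nia.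
rewrite exprD (exprM _ (4 * m)) chig_4m expr1n mulr1.
by rewrite (chiX Hchi); ring.
Qed.

End Det.

Theorem theorem1p2 (F : finFieldType) (chi : F -> algC) (r : nat)
    (a : 'I_((#|F| - 1) %/ 4) -> F) :
  (#|F| %% 8 = 5)%N ->
  char_generator chi ->
  (1 <= r <= #|F| - 2)%N ->
  injective a ->
  (forall x : F, D4 x <-> exists i, a i = x) ->
  \det (\matrix_(i, j) (charpow chi r (a i + a j) + charpow chi r (a i - a j)))
  = (-1) ^+ r * (#|F|%:R / 2) ^+ ((#|F| - 1) %/ 4) *
    \prod_(0 <= k < ((#|F| - 5) %/ 4).+1)
      hyp2F1 chi (charinv (charpow chi r)) (charpow chi (4 * k))
             (charpow chi (4 * k + r)) (-1).
Proof.
move=> Hq Hchi Hr ainj aD4.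
have [g Hg] := @exists_gen F.
have HN : #|F|.-1 = (4 * ((#|F| - 1) %/ 4))%N by lia.
have Hm : ((#|F| - 1) %/ 4 = 2 * (#|F| %/ 8) + 1)%N by lia.
have modd : odd ((#|F| - 1) %/ 4) by rewrite Hm addn1 /= oddM.
have aS4 : forall i, a i \in S4 F.
  by move=> i; apply/(D4_S4 (a i)); apply/aD4; exists i.
rewrite (det_main Hchi Hg HN modd r ainj aS4) (prodR Hchi Hg HN modd r ainj aS4) mul1r.
under [in LHS]eq_bigr => k _ do rewrite (mu_eq Hchi Hg HN modd r k).
have Hm1 := chim1 Hchi Hg HN modd.
rewrite (_ : ((#|F| - 5) %/ 4).+1 = (#|F| - 1) %/ 4)%N; last by lia.
rewrite big_mkord.
under [in RHS]eq_bigr => k _ do rewrite (hyp_eval Hchi Hm1 r (j := (4 * k)%N)) ?oddM //.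
rewrite !big_split /= !prodr_const card_ord.
move: modd; set m := ((#|F| - 1) %/ 4)%N => modd.
set S := \prod_(i < m) _.
have q0 : #|F|%:R != 0 :> algC by rewrite pnatr_eq0 -lt0n; have := card_gt1 F; lia.
have two0 : 2%:R != 0 :> algC by rewrite pnatr_eq0.
have E1 : (#|F|%:R / 2) ^+ m * (-1) ^+ r ^+ m * #|F|%:R^-1 ^+ m = ((-1) ^+ r * 2^-1) ^+ m :> algC.
  rewrite -!exprMn; congr (_ ^+ _); move: ((-1) ^+ r : algC) => s; field.
  exact: q0.
have key : (-1) ^+ r * (#|F|%:R / 2) ^+ m * (-1) ^+ r ^+ m * #|F|%:R^-1 ^+ m = 2^-1 ^+ m :> algC.
  have -> : forall x y z w : algC, x * y * z * w = x * (y * z * w) by move=> *; ring.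
  rewrite E1 exprMn mulrA -exprS -exprM -signr_odd oddM /= modd andbF.
  by rewrite expr0 mul1r.
by rewrite !mulrA key.
Qed.
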